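(* Let $P$ be a finite poset and $h$ any height function on $P$. Then the coefficients of $\mathsf{Z}_{P,h}(x)$ have no pole at $q=1$, and setting $q=1$ in them gives the classical Zeta polynomial $Z_P(x)$ of $P$, i.e. the unique polynomial with $Z_P(n)=\#\{(e_1,\dots,e_{n-1})\in P^{n-1}: e_1\le\cdots\le e_{n-1}\}$ for all integers $n\ge2$.
   Context: $q$ is an indeterminate; $[n]_q=(q^n-1)/(q-1)$. A height function is $h:P\to\mathbb{N}$ with $h(x)<h(y)$ whenever $y$ covers $x$. For a tuple $a$ of $k$ distinct nonnegative integers, $\mathsf{E}_a\in\mathbb{Q}(q)[x]$ is the unique polynomial with $\mathsf{E}_a([n]_q)=\sum_{m\in\mathbb{N}^k,\sum m_i=n}q^{\sum a_im_i}$ for $n\ge0$ (its specialization at $q=1$ is $\binom{x+k-1}{k-1}$). The $q$-Zeta polynomial is $\mathsf{Z}_{P,h}(x)=\sum_{k\ge1}\sum_{c_1<\cdots<c_k\text{ in }P}q^{\sum_i h(c_i)}\mathsf{E}_{(h(c_1),\dots,h(c_k))}((x-[k+1]_q)/q^{k+1})\in\mathbb{Q}(q)[x]$; it is the unique polynomial with $\mathsf{Z}_{P,h}([n]_q)=\sum_{e_1\le\cdots\le e_{n-1}}q^{\sum_j h(e_j)}$ for all $n\ge2$. *)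

(* Defs.v *)
From HB Require Import structures.
From mathcomp Require Import all_boot all_order all_algebra fraction.
Set Implicit Arguments. Unset Strict Implicit. Unset Printing Implicit Defensive.
Import Order.TTheory GRing.Theory Num.Theory.
Local Open Scope ring_scope.

Definition Qq := {fraction {poly rat}}.

Definition toQq (p : {poly rat}) : Qq := FracField.tofrac p.

Definition qvar : Qq := toQq 'X.

Definition qint (n : nat) : Qq := (qvar ^+ n - 1) / (qvar - 1).

Definition covers d (T : porderType d) (x y : T) : Prop :=
  (x < y)%O /\ forall z : T, ~ ((x < z)%O /\ (z < y)%O).

Definition height_function d (T : porderType d) (h : T -> nat) : Prop :=
  forall x y : T, covers x y -> (h x < h y)%N.

Definition multichain d (T : finPOrderType d) (m : nat) (t : m.-tuple T) : bool :=
  sorted (fun a b : T => (a <= b)%O) t.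

Definition is_qZeta d (T : finPOrderType d) (h : T -> nat) (Z : {poly Qq}) : Prop :=
  forall n : nat, (2 <= n)%N ->
    Z.[qint n] = \sum_(t : (n.-1).-tuple T | multichain t) qvar ^+ (\sum_(e <- t) h e).

Definition is_Zeta d (T : finPOrderType d) (Z : {poly rat}) : Prop :=
  forall n : nat, (2 <= n)%N ->
    Z.[n%:R] = #|[set t : (n.-1).-tuple T | multichain t]|%:R.

(* c in Q(q) has no pole at q = 1 and its value at q = 1 is v. *)
Definition eval_at_1 (c : Qq) (v : rat) : Prop :=
  exists a b : {poly rat}, b.[1] != 0 /\ c = toQq a / toQq b /\ v = a.[1] / b.[1].

(* Main.v *)
Require Import Defs.
From HB Require Import structures.
From mathcomp Require Import all_boot all_order all_algebra fraction.
From mathcomp Require Import ring.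
Set Implicit Arguments. Unset Strict Implicit. Unset Printing Implicit Defensive.
Import Order.TTheory GRing.Theory Num.Theory.
Local Open Scope ring_scope.


Lemma toQq_eq0 p : (toQq p == 0) = (p == 0).
Proof. exact: tofrac_eq0. Qed.
Lemma toQqM p r : toQq (p * r) = toQq p * toQq r.
Proof. exact: tofracM. Qed.
Lemma toQqD p r : toQq (p + r) = toQq p + toQq r.
Proof. exact: tofracD. Qed.
Lemma toQqN p : toQq (- p) = - toQq p.
Proof. exact: tofracN. Qed.
Lemma toQq1 : toQq 1 = 1.
Proof. exact: tofrac1. Qed.
Lemma toQq0 : toQq 0 = 0.
Proof. exact: tofrac0. Qed.
Lemma toQqX p n : toQq (p ^+ n) = toQq p ^+ n.
Proof. exact: tofracXn. Qed.
Lemma toQq_inj p r : toQq p = toQq r -> p = r.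
Proof. by move/eqP; rewrite tofrac_eq => /eqP. Qed.

Lemma hne0 (b : {poly rat}) : b.[1] != 0 -> toQq b != 0.
Proof. by move=> h; rewrite toQq_eq0; apply: contraNneq h => ->; rewrite horner0. Qed.

Lemma ev_func c v w : eval_at_1 c v -> eval_at_1 c w -> v = w.
Proof.
move=> [a [b [hb [-> ->]]]] [a' [b' [hb' [E ->]]]].
have nb := hne0 hb; have nb' := hne0 hb'.
have E2 : toQq (a * b') = toQq (a' * b).
  rewrite !toQqM -[toQq a](divfK nb) E. 
  by rewrite mulrAC divfK.
move/toQq_inj/(congr1 (fun p => p.[1])): E2; rewrite !hornerM => E3.
apply/eqP; rewrite eqr_div // E3 //.
Qed.

Lemma ev_poly p : eval_at_1 (toQq p) p.[1].
Proof. by exists p, 1; rewrite hornerC oner_eq0 toQq1 !divr1. Qed.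

Lemma ev_add c c' v v' : eval_at_1 c v -> eval_at_1 c' v' -> eval_at_1 (c + c') (v + v').
Proof.
move=> [a [b [hb [-> ->]]]] [a' [b' [hb' [-> ->]]]].
have nb := hne0 hb; have nb' := hne0 hb'.
exists (a * b' + a' * b), (b * b'); split; first by rewrite hornerM mulf_neq0.
split; first by rewrite toQqD !toQqM (addf_div _ _ nb nb').
by rewrite !hornerE (addf_div _ _ hb hb').
Qed.

Lemma ev_mul c c' v v' : eval_at_1 c v -> eval_at_1 c' v' -> eval_at_1 (c * c') (v * v').
Proof.
move=> [a [b [hb [-> ->]]]] [a' [b' [hb' [-> ->]]]].
exists (a * a'), (b * b'); split; first by rewrite hornerM mulf_neq0.
split; first by rewrite !toQqM (mulf_div (toQq a)).
by rewrite !hornerM (mulf_div a.[1]).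
Qed.

Lemma ev_opp c v : eval_at_1 c v -> eval_at_1 (- c) (- v).
Proof.
move=> [a [b [hb [-> ->]]]]; exists (- a), b; split => //.
by rewrite toQqN hornerN (mulNr (toQq a)) (mulNr a.[1]).
Qed.

Lemma ev_inv c v : eval_at_1 c v -> v != 0 -> eval_at_1 c^-1 v^-1.
Proof.
move=> [a [b [hb [-> ->]]]] hv.
have ha : a.[1] != 0 by apply: contraNneq hv => ->; rewrite mul0r.
exists b, a; split => //; split; by rewrite invf_div.
Qed.

Lemma ev0 : eval_at_1 0 0.
Proof. by have := ev_poly 0; rewrite toQq0 horner0. Qed.
Lemma ev1 : eval_at_1 1 1.
Proof. by have := ev_poly 1; rewrite toQq1 hornerC. Qed.
Lemma ev_exp c v n : eval_at_1 c v -> eval_at_1 (c ^+ n) (v ^+ n).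
Proof. move=> h; elim: n => [|n IH]; first by rewrite !expr0; exact: ev1.
by rewrite !exprS; apply: ev_mul. Qed.
Lemma ev_nat n : eval_at_1 n%:R n%:R.
Proof. elim: n => [|n IH]; first exact: ev0.
by rewrite -addn1 !natrD; apply: ev_add => //; apply: ev1. Qed.
Lemma ev_sum (I : Type) (r : seq I) (P : pred I) (F : I -> Qq) (G : I -> rat) :
  (forall i, P i -> eval_at_1 (F i) (G i)) ->
  eval_at_1 (\sum_(i <- r | P i) F i) (\sum_(i <- r | P i) G i).
Proof. move=> h; apply: (big_ind2 eval_at_1) => //; [exact: ev0 | by move=> *; apply: ev_add]. Qed.


Definition pev (Z : {poly Qq}) (Z0 : {poly rat}) := forall i, eval_at_1 Z`_i Z0`_i.

Lemma pev_add Z Z' W W' : pev Z W -> pev Z' W' -> pev (Z + Z') (W + W').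
Proof. by move=> h h' i; rewrite !coefD; apply: ev_add. Qed.
Lemma pev_mul Z Z' W W' : pev Z W -> pev Z' W' -> pev (Z * Z') (W * W').
Proof.
move=> h h' i; rewrite !coefM; apply: ev_sum => j _; exact: ev_mul.
Qed.
Lemma pev_C c v : eval_at_1 c v -> pev c%:P v%:P.
Proof. by move=> h i; rewrite !coefC; case: (i == 0%N) => //; exact: ev0. Qed.
Lemma pev_X : pev 'X 'X.
Proof. by move=> i; rewrite !coefX; exact: ev_nat. Qed.
Lemma pev_opp Z W : pev Z W -> pev (- Z) (- W).
Proof. by move=> h i; rewrite !coefN; apply: ev_opp. Qed.
Lemma pev_horner Z W c v : pev Z W -> eval_at_1 c v -> eval_at_1 Z.[c] W.[v].
Proof.
move=> h hc.
rewrite (@horner_coef_wide _ (maxn (size Z) (size W)) Z) ?leq_maxl //.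
rewrite (@horner_coef_wide _ (maxn (size Z) (size W)) W) ?leq_maxr //.
by apply: ev_sum => i _; apply: ev_mul => //; apply: ev_exp.
Qed.

Lemma qint_poly n : qint n = toQq (\sum_(i < n) 'X^i).
Proof.
have nz : toQq ('X - 1) != 0.
  by rewrite toQq_eq0 -size_poly_eq0 -polyC1 size_XsubC.
rewrite /qint /qvar.
have -> : toQq 'X ^+ n - 1 = toQq ('X - 1) * toQq (\sum_(i < n) 'X^i).
  by rewrite -toQqM -subrX1 toQqD toQqN toQq1 toQqX.
have -> : toQq 'X - 1 = toQq ('X - 1) by rewrite toQqD toQqN toQq1.
by rewrite mulrC mulKf.
Qed.

Lemma ev_qint n : eval_at_1 (qint n) n%:R.
Proof.
rewrite qint_poly.
have -> : (n%:R : rat) = (\sum_(i < n) ('X^i : {poly rat})).[1].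
  rewrite horner_sum. under eq_bigr do rewrite hornerXn expr1n.
  by rewrite sumr_const card_ord.
exact: ev_poly.
Qed.

Lemma newton k : forall s (Z : {poly Qq}), (size Z <= k)%N ->
  (forall i, (i < k)%N -> exists v, eval_at_1 Z.[qint (s + i)] v) ->
  exists Z0, pev Z Z0.
Proof.
elim: k => [|k IH] s Z hs hv.
  exists 0; move: hs; rewrite leqn0 size_poly_eq0 => /eqP -> i.
  by rewrite !coef0; exact: ev0.
set x0 := qint s; set c := Z.[x0].
have hr : root (Z - c%:P) x0 by rewrite /root hornerD hornerN hornerC subrr.
case/factor_theorem: hr => Z1 E.
have [v0 hv0] := hv 0%N isT; rewrite addn0 -/x0 -/c in hv0.
have hsz : (size Z1 <= k)%N.
  have [->|nz] := eqVneq Z1 0; first by rewrite size_poly0.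
  have : (size (Z - c%:P)%R <= k.+1)%N.
    apply: (leq_trans (size_polyD _ _)); rewrite size_polyN geq_max hs.
    by apply: (leq_trans (size_polyC_leq1 _)).
  by rewrite E size_Mmonic ?monicXsubC // size_XsubC addn2.
have [Z10 h10] : exists Z0, pev Z1 Z0.
  apply: (IH s.+1) => // i hi.
  have [w hw] := hv i.+1 hi.
  set x := qint (s.+1 + i).
  have hd : eval_at_1 (x - x0) (i.+1)%:R.
    have -> : (i.+1)%:R = (s.+1 + i)%:R - s%:R :> rat.
      by rewrite addSnnS natrD addrAC subrr add0r.
    exact: (ev_add (ev_qint (s.+1 + i)) (ev_opp (ev_qint s))).
  have nd : x - x0 != 0.
    apply/eqP => e; move: hd; rewrite e => /(ev_func ev0) /eqP.
    by rewrite eq_sym pnatr_eq0.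
  have -> : Z1.[x] = (Z.[x] - c) / (x - x0).
    have : (Z - c%:P).[x] = (Z1 * ('X - x0%:P)).[x] by rewrite E.
    rewrite hornerD hornerN hornerC hornerM hornerD hornerN hornerX hornerC => ->.
    by rewrite mulfK.
  exists ((w - v0) / (i.+1)%:R); apply: ev_mul.
    apply: ev_add; last exact: ev_opp.
    by rewrite /x addSnnS.
  by apply: ev_inv => //; rewrite pnatr_eq0.
exists (Z10 * ('X - (s%:R)%:P) + v0%:P).
have -> : Z = Z1 * ('X - x0%:P) + c%:P by rewrite -E subrK.
apply: pev_add; last exact: pev_C.
apply: pev_mul => //; apply: pev_add; first exact: pev_X.
by apply: pev_opp; apply: pev_C; exact: ev_qint.
Qed.


Lemma ev_msum d (T : finPOrderType d) (h : T -> nat) m :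
  eval_at_1 (\sum_(t : m.-tuple T | multichain t) qvar ^+ (\sum_(e <- t) h e))
            #|[set t : m.-tuple T | multichain t]|%:R.
Proof.
have -> : (#|[set t : m.-tuple T | multichain t]|%:R : rat) =
   \sum_(t : m.-tuple T | multichain t) 1.
  by rewrite sumr_const cardsE.
apply: ev_sum => t _.
have := ev_poly ('X^(\sum_(e <- t) h e)).
by rewrite hornerXn expr1n /qvar toQqX.
Qed.

Lemma part2 d (T : finPOrderType d) (h : T -> nat) (Z : {poly Qq}) :
  is_qZeta h Z -> exists Z0 : {poly rat}, is_Zeta T Z0 /\ forall i : nat, eval_at_1 Z`_i Z0`_i.
Proof.
move=> hZ.
have [Z0 hZ0] : exists Z0, pev Z Z0.
  apply: (@newton (size Z) 2 Z (leqnn _)) => i _.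
  by eexists; rewrite hZ //; exact: ev_msum.
exists Z0; split => // n hn.
apply: (ev_func (pev_horner hZ0 (ev_qint n))).
rewrite hZ //; exact: ev_msum.
Qed.


Section Comb.
Variables (d : Order.disp_t) (T : finPOrderType d) (h : T -> nat).

Lemma sum_cons m (F : m.+1.-tuple T -> Qq) :
  \sum_(t : m.+1.-tuple T) F t = \sum_(z : T) \sum_(t : m.-tuple T) F [tuple of z :: t].
Proof.
rewrite pair_big /=.
rewrite (reindex (fun p : T * m.-tuple T => [tuple of p.1 :: p.2])) /=.
  by apply: eq_bigl.
apply: onW_bij; exists (fun t => (thead t, [tuple of behead t])).
  by move=> [z t] /=; congr pair; apply: val_inj.
by move=> t /=; rewrite -tuple_eta.
Qed.

Lemma sum_cons_cond m (P : m.+1.-tuple T -> bool) (F : m.+1.-tuple T -> Qq) :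
  \sum_(t | P t) F t =
  \sum_(z : T) \sum_(t : m.-tuple T | P [tuple of z :: t]) F [tuple of z :: t].
Proof.
rewrite big_mkcond sum_cons; apply: eq_bigr => z _; by rewrite [RHS]big_mkcond.
Qed.

Definition wt m (t : m.-tuple T) : Qq := qvar ^+ (\sum_(e <- t) h e).

Lemma wt_cons m z (t : m.-tuple T) : wt [tuple of z :: t] = qvar ^+ h z * wt t.
Proof. by rewrite /wt big_cons exprD. Qed.

Definition G m (y : T) : Qq :=
  \sum_(t : m.-tuple T | multichain t && all (fun e => (y <= e)%O) t) wt t.

Lemma mc_cons m z (t : m.-tuple T) :
  multichain [tuple of z :: t] = all (fun e => (z <= e)%O) t && multichain t.
Proof. by rewrite /multichain /= path_sortedE //; exact: le_trans. Qed.

Lemma G0 y : G 0 y = 1.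
Proof.
rewrite /G (big_pred1 [tuple]); first by rewrite /wt big_nil expr0.
move=> t /=; rewrite (_ : t == [tuple] = true); last by apply/eqP/tuple0.
by rewrite [t]tuple0.
Qed.

Lemma GS m y : G m.+1 y = qvar ^+ h y * G m y +
   \sum_(z | (y < z)%O) qvar ^+ h z * G m z.
Proof.
rewrite /G sum_cons_cond.
have -> : \sum_z \sum_(t : m.-tuple T | multichain [tuple of z :: t] &&
     all (fun e => (y <= e)%O) [tuple of z :: t]) wt [tuple of z :: t] =
   \sum_(z | (y <= z)%O) (qvar ^+ h z * G m z).
  rewrite [RHS]big_mkcond; apply: eq_bigr => z _.
  case: (boolP (y <= z)%O) => hyz.
    rewrite /G mulr_sumr; apply: eq_big => [t|t _]; last by rewrite wt_cons.
    rewrite mc_cons /= hyz /=.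
    case: (boolP (all _ t)) => /= ha; last by rewrite andbF.
    rewrite andbT; apply/andb_idr => _.
    by apply/allP => e /(allP ha) /(le_trans hyz).
  apply: big1 => t; rewrite /= (negbTE hyz) /=; by rewrite andbF.
rewrite (bigD1 y) //=; congr (_ + _); apply: eq_bigl => z.
by rewrite lt_def andbC.
Qed.

Lemma Stot m : \sum_(t : m.+1.-tuple T | multichain t) wt t =
  \sum_z qvar ^+ h z * G m z.
Proof.
rewrite sum_cons_cond; apply: eq_bigr => z _.
rewrite /G mulr_sumr; apply: eq_big => [t|t _]; last by rewrite wt_cons.
by rewrite mc_cons andbC.
Qed.

End Comb.


Lemma hmono d (T : finPOrderType d) (h : T -> nat) : height_function h ->
  forall x y : T, (x < y)%O -> (h x < h y)%N.
Proof.
move=> hh.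
suff H : forall n (x y : T), (#|[set z | (x < z)%O && (z < y)%O]| <= n)%N ->
    (x < y)%O -> (h x < h y)%N.
  by move=> x y; apply: (H _ x y (leqnn _)).
elim=> [|n IH] x y hn hxy.
  apply: hh; split => // z [h1 h2].
  move: hn; rewrite leqn0 cards_eq0 => /eqP E.
  have : z \in [set z | (x < z)%O && (z < y)%O] by rewrite inE h1 h2.
  by rewrite E inE.
case: (boolP ([set z | (x < z)%O && (z < y)%O] == set0)) => [/eqP E | /set0Pn [w]].
  apply: hh; split => // z [h1 h2].
  have : z \in [set z | (x < z)%O && (z < y)%O] by rewrite inE h1 h2.
  by rewrite E inE.
rewrite inE => /andP [h1 h2].
apply: (@ltn_trans (h w)); [apply: (IH x w) | apply: (IH w y)] => //.
  rewrite -ltnS; apply: leq_trans hn; apply: proper_card; apply/properP; split.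
    by apply/subsetP => z; rewrite !inE => /andP [-> /lt_trans ->].
  by exists w; rewrite !inE ?h1 ?h2 ?ltxx ?andbF.
rewrite -ltnS; apply: leq_trans hn; apply: proper_card; apply/properP; split.
  by apply/subsetP => z; rewrite !inE => /andP [/(lt_trans h1) -> ->].
by exists w; rewrite !inE ?h1 ?h2 ?ltxx.
Qed.

Lemma fld_id (R : fieldType) (r d qj qa Y : R) : d != 0 -> d = qj - qa ->
  r / d * (qj * Y) = qa * (r / d * Y) + r * Y.
Proof. move=> nd E; have -> : qj = d + qa by rewrite E subrK.
by field. Qed.

Lemma rng_id (R : comRingType) (A B C D E F : R) : A = B * C + E ->
  A + D * (B * F) = B * (C + D * F) + E.
Proof. by move=> ->; ring. Qed.

Lemma qvarX n : qvar ^+ n = toQq 'X^n.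
Proof. by rewrite /qvar toQqX. Qed.

Lemma qX_neq j a : j != a -> qvar ^+ j - qvar ^+ a != 0.
Proof.
move=> nja; rewrite subr_eq0 !qvarX; apply/eqP => /toQq_inj E.
have := congr1 (fun p : {poly rat} => size p) E.
by rewrite /= !size_polyXn => /eqP; rewrite eqSS (negbTE nja).
Qed.

Lemma solve a (r : {poly Qq}) (f : nat -> Qq) :
 (forall j, (j <= a)%N -> r`_j = 0) ->
 (forall m, f m.+1 = qvar ^+ a * f m + r.[qvar ^+ m]) ->
 exists p : {poly Qq}, (forall j, (j < a)%N -> p`_j = 0) /\ forall m, f m = p.[qvar ^+ m].
Proof.
move=> hr hf.
pose p0 := \poly_(j < size r) (r`_j / (qvar ^+ j - qvar ^+ a)).
pose p := p0 + (f 0%N - p0.[1]) *: 'X^a.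
have k0 : forall Y, p0.[qvar * Y] = qvar ^+ a * p0.[Y] + r.[Y].
  move=> Y.
  rewrite !(@horner_coef_wide _ (size r) p0) ?size_poly //.
  rewrite (@horner_coef_wide _ (size r) r) // mulr_sumr -big_split /=.
  apply: eq_bigr => j _; rewrite coef_poly ltn_ord exprMn.
  have [eja|nja] := eqVneq (nat_of_ord j) a.
    by rewrite eja hr // !mul0r !mulr0 addr0.
  by apply: fld_id; [exact: qX_neq | ].
have key : forall Y, p.[qvar * Y] = qvar ^+ a * p.[Y] + r.[Y].
  move=> Y; rewrite /p !hornerD !hornerZ !hornerXn exprMn k0.
  exact: rng_id.
exists p; split.
  move=> j hj; rewrite /p coefD coefZ coefXn coef_poly.
  rewrite (_ : (j == a) = false) ?mulr0 ?addr0; last by apply/negbTE; rewrite neq_ltn hj.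
  by case: ifP => // _; rewrite hr ?mul0r // ltnW.
elim=> [|m IH].
  by rewrite expr0 /p hornerD hornerZ hornerXn expr1n mulr1 addrC subrK.
by rewrite hf IH exprS key.
Qed.

Section Fin.
Variables (d : Order.disp_t) (T : finPOrderType d) (h : T -> nat).
Hypothesis hh : height_function h.

Definition Gspec (z : T) (P : {poly Qq}) :=
  (forall j, (j < h z)%N -> P`_j = 0) /\ forall m, G h m z = P.[qvar ^+ m].

Lemma G_step (y : T) : (forall z, (y < z)%O -> exists P, Gspec z P) -> exists P, Gspec y P.
Proof.
move=> IH.
have /fin_all_exists [Pf hPf] : forall z : T, exists P : {poly Qq}, (y < z)%O -> Gspec z P.
  move=> z; case: (boolP (y < z)%O) => hyz.
    by have [P hP] := IH z hyz; exists P.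
  by exists 0.
apply: (@solve (h y) (\sum_(z | (y < z)%O) qvar ^+ h z *: Pf z) (fun m => G h m y)).
  move=> j hj; rewrite coef_sum; apply: big1 => z hz.
  rewrite coefZ (proj1 (hPf z hz)) ?mulr0 //.
  exact: leq_ltn_trans hj (hmono hh hz).
move=> m; rewrite GS horner_sum; congr (_ + _); apply: eq_bigr => z hz.
by rewrite hornerZ (proj2 (hPf z hz)).
Qed.

Lemma G_poly (y : T) : exists P, Gspec y P.
Proof.
suff H : forall n (y : T), (#|[set z | (y < z)%O]| <= n)%N -> exists P, Gspec y P.
  exact: (H _ y (leqnn _)).
elim=> [|n IHn] x hn; apply: G_step => z hxz.
  move: hn; rewrite leqn0 cards_eq0 => /eqP E.
  have : z \in [set z | (x < z)%O] by rewrite inE.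
  by rewrite E inE.
apply: IHn; rewrite -ltnS; apply: leq_trans hn; apply: proper_card; apply/properP; split.
  by apply/subsetP => w; rewrite !inE => /(lt_trans hxz).
by exists z; rewrite !inE ?hxz ?ltxx.
Qed.

Lemma qvar1_neq0 : qvar - 1 != 0.
Proof.
have -> : qvar - 1 = toQq ('X - 1) by rewrite toQqD toQqN toQq1.
by rewrite toQq_eq0 -size_poly_eq0 -polyC1 size_XsubC.
Qed.

Lemma qvar_neq0 : qvar != 0.
Proof. by rewrite /qvar toQq_eq0 -size_poly_eq0 size_polyX. Qed.

Lemma part1 : exists Z : {poly Qq}, is_qZeta h Z.
Proof.
have /fin_all_exists [Pf hPf] := G_poly.
pose Q := \sum_z qvar ^+ h z *: Pf z.
pose L : {poly Qq} := (qvar ^+ 2)^-1 *: (1 + (qvar - 1) *: 'X).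
exists (Q \Po L) => n; case: n => [|[|m]] // _.
rewrite horner_comp.
have -> : L.[qint m.+2] = qvar ^+ m.
  rewrite /L hornerZ hornerD hornerZ hornerX hornerC.
  rewrite /qint [(qvar - 1) * _]mulrC (divfK qvar1_neq0) addrC subrK.
  by rewrite -(addn2 m) exprD mulrC mulfK // expf_neq0 // qvar_neq0.
rewrite -[RHS]/(\sum_(t : m.+1.-tuple T | multichain t) wt h t) Stot.
rewrite /Q horner_sum; apply: eq_bigr => z _.
by rewrite hornerZ (proj2 (hPf z)).
Qed.

End Fin.

Unset Implicit Arguments.

Theorem mainTheorem19 (d : Order.disp_t) (T : finPOrderType d) (h : T -> nat)
  (hh : height_function h) :
  (exists Z : {poly Qq}, is_qZeta h Z) /\
  forall Z : {poly Qq}, is_qZeta h Z ->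
    exists Z0 : {poly rat}, is_Zeta T Z0 /\
      forall i : nat, eval_at_1 Z`_i Z0`_i.
Proof.
split.
  have H := @part1 d T h hh.
  exact H.
move=> Z hZ.
have H2 := @part2 d T h Z hZ.
exact H2.
Qed.
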